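(* Let $N,B,W,T$ be positive integers with $N\le B$, $B+1\le W$ and $T\ge B$, and set $T_{\mathrm{eff}}=\min(T,W-1)$. If a rate $R$ is achievable with delay $T$ over the channel $\mathcal{C}(N,B,W)$, then \[ \left(\frac{R}{1-R}\right)B+N\le T_{\mathrm{eff}}+1 . \]
   Context: Channel $\mathcal{C}(N,B,W)$: a packet erasure channel on a sequence of channel uses $i=0,1,2,\dots$ such that in every sliding window of $W$ consecutive channel uses, the set of erased positions is either a single burst of consecutive erasures of length at most $B$, or consists of at most $N$ erasures in arbitrary positions. Streaming code (equal source–channel rates): at each time $i\ge 0$ the encoder observes a source symbol $\mathbf{s}[i]\in\mathbb{F}_q^k$ and transmits $\mathbf{x}[i]=f_i(\mathbf{s}[0],\dots,\mathbf{s}[i])\in\mathbb{F}_q^n$; the channel output is $\mathbf{y}[i]=\mathbf{x}[i]$ or $\mathbf{y}[i]=\star$ (erasure). The code has delay $T$ if there are decoding functions with $\mathbf{s}[i]=g_i(\mathbf{y}[0],\dots,\mathbf{y}[i+T])$ for every $i\ge0$, every source sequence and every erasure pattern allowed by the channel. Its rate is $R=k/n$. A rate $R$ is achievable with delay $T$ over $\mathcal{C}(N,B,W)$ if such a streaming code of rate $R$ exists over some field size $q$. *)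

(* Defs.v *)
From HB Require Import structures.
From mathcomp Require Import all_boot all_order all_algebra all_field.
Set Implicit Arguments. Unset Strict Implicit. Unset Printing Implicit Defensive.
Import Order.TTheory GRing.Theory Num.Theory.

(* An erasure pattern e : nat -> bool (e t = true iff channel use t is erased)
   is admissible for C(N,B,W) if in every window {j, ..., j+W-1} of W
   consecutive channel uses, the erased positions either number at most N,
   or form a single burst of consecutive positions of length at most B
   (the interval [a, a+L) intersected with the window, with L <= B). *)
Definition admissible_erasures (N B W : nat) (e : nat -> bool) : Prop :=
  forall j : nat,
    (count e (iota j W) <= N)%N \/
    exists a L : nat, (L <= B)%N /\
      forall t : nat, (j <= t < j + W)%N -> e t = (a <= t < a + L)%N.

Definition channel_output (V : Type) (e : nat -> bool) (x : nat -> V)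
  : nat -> option V := fun t => if e t then None else Some (x t).

(* A streaming code over field F with source symbols in F^k, channel packets in
   F^n, delay T, correcting every admissible erasure pattern of C(N,B,W).
   enc i s = f_i(s[0..i]) (causality), dec i y = g_i(y[0..i+T]). *)
Definition streaming_code (F : finFieldType) (k n T N B W : nat) : Prop :=
  exists (enc : nat -> (nat -> 'rV[F]_k) -> 'rV[F]_n)
         (dec : nat -> (nat -> option 'rV[F]_n) -> 'rV[F]_k),
    (forall i (s s' : nat -> 'rV[F]_k),
        (forall j, (j <= i)%N -> s j = s' j) -> enc i s = enc i s') /\
    (forall i (y y' : nat -> option 'rV[F]_n),
        (forall j, (j <= i + T)%N -> y j = y' j) -> dec i y = dec i y') /\
    (forall (s : nat -> 'rV[F]_k) (e : nat -> bool),
        admissible_erasures N B W e ->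
        forall i, dec i (channel_output e (fun t => enc t s)) = s i).

Definition achievable (N B W T : nat) (R : rat) : Prop :=
  exists (F : finFieldType) (k n : nat),
    (0 < k)%N /\ (0 < n)%N /\ R = (k%:R / n%:R)%R /\ streaming_code F k n T N B W.

(* Main.v *)
Require Import Defs.
From HB Require Import structures.
From mathcomp Require Import all_boot all_order all_algebra all_field.
From mathcomp Require Import zify.
Import Order.TTheory GRing.Theory Num.Theory.

Lemma sum_period (P B L : nat) : B <= P ->
  \sum_(0 <= i < L * P) (~~ (i %% P < B) : nat) = L * (P - B).
Proof.
move=> BP; elim: L => [|L IH]; first by rewrite mul0n big_geq.
rewrite !mulSnr (@big_cat_nat _ _ _ (L * P) 0 (L * P + P) _ _ (leq0n _) (leq_addr P (L * P))) /=.
rewrite IH; congr (_ + _).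
rewrite -{1}(add0n (L * P)) big_addn addKn.
rewrite (@eq_big_nat _ _ _ 0 P _ (fun i => (B <= i : nat))); last first.
  move=> i Hi; rewrite addnC modnMDl modn_small; last by lia.
  by rewrite -leqNgt.
rewrite (@big_cat_nat _ _ _ B 0 P _ _ (leq0n B) BP) /=.
rewrite big_nat_cond big1; last by move=> i /andP[/andP[_ H] _]; rewrite leqNgt H.
rewrite add0n (@eq_big_nat _ _ _ B P _ (fun _ => 1)); last by move=> i /andP[->].
by rewrite sum_nat_const_nat muln1.
Qed.

Lemma card_pred_sum (m : nat) (p : pred nat) :
  #|[pred u : 'I_m | p u]| = \sum_(0 <= i < m) (p i : nat).
Proof.
rewrite -sum1_card big_mkcond /= big_mkord; apply: eq_bigr => i _.
by rewrite inE; case: (p i).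
Qed.
Lemma modP (P B q d : nat) : 0 < P -> d < 2 * P ->
  ((q * P + d) %% P < B) = (d < B) || (P <= d < P + B).
Proof.
move=> P0 dlt; rewrite modnMDl.
case: (ltnP d P) => H.
  by rewrite modn_small //; apply/idP/idP => X; lia.
have -> : d = P + (d - P) by lia.
rewrite modnDl modn_small; last by lia.
apply/idP/idP => X; lia.
Qed.

Lemma count_iota_le (p : pred nat) j W (s : seq nat) :
  (forall u, j <= u < j + W -> p u -> u \in s) -> count p (iota j W) <= size s.
Proof.
move=> H; rewrite -size_filter; apply: uniq_leq_size.
  by apply: filter_uniq; apply: iota_uniq.
move=> u; rewrite mem_filter mem_iota => /andP[pu Hu]; exact: H.
Qed.

Lemma adm (N B W T t : nat) :
  (0 < N) -> (0 < B) -> (0 < W) -> (N <= B) -> (B + 1 <= W) -> (B <= T) ->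
  let P := B + (minn T (W - 1) + 1 - N) in
  admissible_erasures N B W (fun u => (u %% P < B) && (t <= u <= t + T)).
Proof.
move=> N0 B0 W0 NB BW BT P j.
have P0 : 0 < P by rewrite /P; lia.
set lo := maxn j t. have Hlo : lo = maxn j t by [].
set hi := minn (j + W) (t + T + 1). have Hhi : hi = minn (j + W) (t + T + 1) by [].
have HP : P = B + (minn T (W - 1) + 1 - N) by [].
set base := lo %/ P * P.
have Hb : lo = base + lo %% P by rewrite /base -divn_eq.
have rlt : lo %% P < P by rewrite ltn_pmod.
have key : forall u, j <= u < j + W ->
  ((u %% P < B) && (t <= u <= t + T)) =
  (lo <= u < hi) && ((u < base + B) || (base + P <= u < base + P + B)).
  move=> u Hu; case: (boolP (lo <= u < hi)) => H; last first.
    apply/negbTE; apply/negP => /andP[_ X]; move/negP: H; apply; lia.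
  have Hu' : u = lo %/ P * P + (u - base) by rewrite -/base; lia.
  rewrite [in LHS]Hu' modP //; last by lia.
  apply/idP/idP => X; lia.
clearbody base lo hi.
case: (leqP hi (base + P)) => Hc.
  right; exists lo, (minn hi (base + B) - lo); split; first by lia.
  move=> u Hu; rewrite key //; apply/idP/idP => X; lia.
case: (leqP B (lo %% P)) => Hr.
  right; exists (base + P), (minn hi (base + P + B) - (base + P)); split; first by lia.
  move=> u Hu; rewrite key //; apply/idP/idP => X; lia.
left.
apply: (@leq_trans (size (iota lo (base + B - lo) ++ iota (base + P) (hi - (base + P))))).
  apply: count_iota_le => u Hu; rewrite key // mem_cat !mem_iota => X.
  apply/orP; lia.
rewrite size_cat !size_iota; lia.
Qed.

Lemma rate_bound (F : finFieldType) (k n N B W T : nat) :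
  (0 < N) -> (0 < B) -> (0 < W) -> (N <= B) -> (B + 1 <= W) -> (B <= T) ->
  streaming_code F k n T N B W ->
  k * (B + (minn T (W - 1) + 1 - N)) <= n * (minn T (W - 1) + 1 - N).
Proof.
move=> N0 B0 W0 NB BW BT [enc [dec [Hc [Hd Hok]]]].
set U := minn T (W - 1) + 1 - N.
set P := B + U.
have HP : P = B + (minn T (W - 1) + 1 - N) by [].
pose e := fun u => u %% P < B.
have recover : forall (s s' : nat -> 'rV[F]_k) t,
    (forall j, j < t -> s j = s' j) ->
    (forall u, t <= u <= t + T -> ~~ e u -> enc u s = enc u s') -> s t = s' t.
  move=> s s' t H1 H2.
  have Ha := @adm N B W T t N0 B0 W0 NB BW BT; rewrite /= -HP in Ha.
  rewrite -(Hok s _ Ha t) -(Hok s' _ Ha t).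
  apply: Hd => u Hu; rewrite /channel_output.
  case E: ((u %% P < B) && (t <= u <= t + T)) => //; congr Some.
  case: (ltnP u t) => Hut.
    by apply: Hc => i Hi; apply: H1; lia.
  apply: H2; first by lia.
  rewrite /e; apply/negP => X; move: E; rewrite X /=; lia.
have cnt : forall L, k * (L * P) <= n * (L * U + T).
  move=> L; set M := L * P.
  pose ext (f : {ffun 'I_M -> 'rV[F]_k}) (j : nat) : 'rV[F]_k :=
    if insub j is Some i then f i else 0%R.
  pose Phi (f : {ffun 'I_M -> 'rV[F]_k}) : {ffun {u : 'I_(M + T) | ~~ e u} -> 'rV[F]_n} :=
    [ffun v => enc (val (val v)) (ext f)].
  have inj : injective Phi.
    move=> f g /ffunP Hfg.
    have Hext : forall t, ext f t = ext g t.
      elim/ltn_ind => t IH; case: (ltnP t M) => HtM.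
        apply: recover => // u Hu He.
        have Hu2 : u < M + T by lia.
        by have := Hfg (exist _ (Ordinal Hu2) He); rewrite !ffunE.
      by rewrite /ext insubF // ltnNge HtM.
    apply/ffunP => i; have := Hext i; by rewrite /ext valK.
  have := leq_card Phi inj.
  rewrite !card_ffun !card_mx card_ord card_sig -!expnM leq_exp2l; last first.
    exact: card_finNzRing_gt1.
  rewrite !mul1n => H; apply: (leq_trans H); rewrite leq_mul2l; apply/orP; right.
  have -> : #|[pred u : 'I_(M + T) | ~~ e u]| = \sum_(0 <= i < M + T) (~~ e i : nat).
    by rewrite -card_pred_sum; apply: eq_card => i; rewrite !inE.
  rewrite (@big_cat_nat _ _ _ M 0 (M + T) _ _ (leq0n _) (leq_addr T M)) /=.
  rewrite /e sum_period; last by rewrite /P leq_addr.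
  rewrite /P addKn leq_add2l.
  apply: (@leq_trans (\sum_(M <= i < M + T) 1)); first by apply: leq_sum => i _; case: (~~ _).
  by rewrite sum_nat_const_nat muln1 addKn.
have H := cnt (n * T).+1.
rewrite leqNgt; apply/negP => X.
have Y : (n * U).+1 * (n * T).+1 <= k * P * (n * T).+1 by rewrite leq_mul2r X orbT.
move: H Y; rewrite (mulnC _ P) mulnA (mulnC _ U) mulnDr mulnA.
move: (k * P) (n * U) (n * T) => z y x H Y.
move: Y; rewrite mulSn; nia.
Qed.

From mathcomp Require Import ring lra.
Local Open Scope ring_scope.

Theorem theorem1 (N B W T : nat) (R : rat) :
  (0 < N)%N -> (0 < B)%N -> (0 < W)%N -> (0 < T)%N ->
  (N <= B)%N -> (B + 1 <= W)%N -> (B <= T)%N ->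
  achievable N B W T R ->
  (R / (1 - R)) * B%:R + N%:R <= (minn T (W - 1))%:R + 1.
Proof.
move=> N0 B0 W0 T0 NB BW BT [F [k [n [k0 [n0 [-> Hcode]]]]]].
have H := @rate_bound F k n N B W T N0 B0 W0 NB BW BT Hcode.
move: H; set m := minn T (W - 1); set U := (m + 1 - N)%N => H.
have Hm : (N <= m)%N by rewrite /m; lia.
have HU : m%:R + 1 = U%:R + N%:R :> rat.
  by rewrite natr1 -natrD; congr (_%:R); rewrite /U; lia.
have kn : (k < n)%N.
  rewrite ltnNge; apply/negP => Hnk.
  have h1 : (n * U <= k * U)%N by rewrite leq_mul2r Hnk orbT.
  have h2 : (0 < k * B)%N by rewrite muln_gt0 k0 B0.
  move: H; rewrite mulnDr; move: (n * U)%N (k * U)%N (k * B)%N h1 h2 => a b c; lia.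
have Hr : (k * B + k * U <= n * U)%N by rewrite -mulnDr.
have Hr' : k%:R * B%:R + k%:R * U%:R <= n%:R * U%:R :> rat.
  by rewrite -!natrM -natrD ler_nat.
have nk : (0 : rat) < n%:R - k%:R by rewrite subr_gt0 ltr_nat.
have n0' : (n%:R : rat) != 0 by rewrite pnatr_eq0 -lt0n.
have E : k%:R / n%:R / (1 - k%:R / n%:R) = k%:R / (n%:R - k%:R) :> rat.
  by field; rewrite ?n0'; apply/andP; split => //; rewrite lt0r_neq0.
rewrite E HU mulrAC lerD2r ler_pdivrMr //.
rewrite mulrBr lerBrDr.
by rewrite (mulrC U%:R) (mulrC U%:R).
Qed.
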